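(* Suppose either $R=0$, or $X$ and $Y$ are independent under $P_{XY}$ (i.e. $P_{XY}=P_XP_Y$). Then $$\sup_{Q_Y}\ \inf_{Q_{U\mid Y}:\ I(Q_{Y;U})\le R}\ \sup_{Q_{X\mid YU}}\Big(\rho\, R_D(Q_{X\mid U})-D\big(Q_{XYU}\,\|\,P_{XY}Q_{U\mid Y}\big)\Big) =\sup_{Q_X}\Big(\rho\,R_D(Q_X)-D(Q_X\|P_X)\Big),$$ where $R_D(Q_X)=\min_{Q_{\hat X\mid X}:\ \mathbb{E}[d(X,\hat X)]\le D} I(X;\hat X)$ is the (unconditional) rate–distortion function of $Q_X$.
   Context: $\mathcal{X},\mathcal{Y},\hat{\mathcal{X}}$ are finite sets, $P_{XY}$ is a PMF on $\mathcal{X}\times\mathcal{Y}$ with $X$-marginal $P_X$ and $Y$-marginal $P_Y$, $d\colon\mathcal{X}\times\hat{\mathcal{X}}\to\mathbb{R}_{\ge0}$, $D>0$, $R\ge0$, $\rho>0$. The optimization on the left is over $Q_Y\in\mathcal{P}(\mathcal{Y})$, a finite set $\mathcal{U}$, $Q_{U\mid Y}\in\mathcal{P}(\mathcal{U}\mid\mathcal{Y})$, $Q_{X\mid YU}\in\mathcal{P}(\mathcal{X}\mid\mathcal{Y}\times\mathcal{U})$ with quantities evaluated under $Q_{XYU}=Q_YQ_{U\mid Y}Q_{X\mid YU}$; on the right over $Q_X\in\mathcal{P}(\mathcal{X})$. $R_D(Q_{X\mid U})=\min_{Q_{\hat X\mid XU}:\ \mathbb{E}[d(X,\hat X)]\le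 D} I(X;\hat X\mid U)$ evaluated under $Q_{\hat X\mid XU}Q_{XU}$. $P_{XY}Q_{U\mid Y}$ denotes $(x,y,u)\mapsto P_{XY}(x,y)Q_{U\mid Y}(u\mid y)$. Logarithms are base 2. *)

(* Defs.v *)
From HB Require Import structures.
From mathcomp Require Import all_boot all_order all_algebra.
From mathcomp Require Import all_classical all_reals all_analysis.
Set Implicit Arguments. Unset Strict Implicit. Unset Printing Implicit Defensive.
Import Order.TTheory GRing.Theory Num.Theory.
Local Open Scope ring_scope.
Local Open Scope classical_set_scope.

Section InfoDefs.
Variable R : realType.

Definition log2 (x : R) : R := ln x / ln 2.

Definition is_pmf (T : finType) (p : T -> R) : Prop :=
  (forall t, 0 <= p t) /\ \sum_t p t = 1.

(* a conditional PMF W : A -> B -> R, W a b = W(b | a) *)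
Definition is_cpmf (A B : finType) (W : A -> B -> R) : Prop :=
  forall a, is_pmf (W a).

(* Kullback-Leibler divergence (base 2), +oo if q is not << p;
   convention 0 log 0 = 0 *)
Definition KL (T : finType) (q p : T -> R) : \bar R :=
  if [forall t, (p t == 0) ==> (q t == 0)]
  then (\sum_(t | 0 < q t) q t * log2 (q t / p t))%:E
  else +oo%E.

Definition MI (A B : finType) (p : A * B -> R) : R :=
  \sum_(ab | 0 < p ab)
     p ab * log2 (p ab / ((\sum_b' p (ab.1, b')) * (\sum_a' p (a', ab.2)))).

Definition CMI (A B C : finType) (p : A * B * C -> R) : R :=
  \sum_(abc | 0 < p abc)
     p abc * log2 ((p abc * (\sum_a' \sum_b' p (a', b', abc.2)))
                   / ((\sum_b' p (abc.1.1, b', abc.2))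
                      * (\sum_a' p (a', abc.1.2, abc.2)))).

(* unconditional rate-distortion function R_D(Q_X)
   (min over an empty feasible set is +oo; the min, when the feasible
   set is nonempty, is attained, so it equals the infimum) *)
Definition RD (X Xh : finType) (d : X -> Xh -> R) (D : R) (QX : X -> R)
  : \bar R :=
  ereal_inf [set (MI (fun xxh : X * Xh => QX xxh.1 * W xxh.1 xxh.2))%:E
            | W in [set W : X -> Xh -> R | is_cpmf W /\
                 \sum_x \sum_xh QX x * W x xh * d x xh <= D]].

Definition RDc (X Xh U : finType) (d : X -> Xh -> R) (D : R) (QXU : X * U -> R)
  : \bar R :=
  ereal_inf [set (CMI (fun t : X * Xh * U =>
                      QXU (t.1.1, t.2) * W (t.1.1, t.2) t.1.2))%:E
            | W in [set W : X * U -> Xh -> R | is_cpmf W /\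
                 \sum_x \sum_u \sum_xh QXU (x, u) * W (x, u) xh * d x xh <= D]].

End InfoDefs.

(* Main.v *)
Require Import Defs.
From HB Require Import structures.
From mathcomp Require Import all_boot all_order all_algebra.
From mathcomp Require Import all_classical all_reals all_analysis.
From mathcomp Require Import ring lra.
Import Order.TTheory GRing.Theory Num.Theory.
Local Open Scope ring_scope.
Local Open Scope classical_set_scope.
Set Implicit Arguments. Unset Strict Implicit.

Section Helpers.
Variable R : realType.

Lemma ln_le_sub1 (x : R) : 0 < x -> ln x <= x - 1.
Proof.
move=> x0; have := expR_ge1Dx (ln x); rewrite lnK ?posrE //; lra.
Qed.

Lemma ln_eq_sub1 (x : R) : 0 < x -> ln x = x - 1 -> x = 1.
Proof.
move=> x0 Hx; set s := Num.sqrt x.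
have s0 : 0 < s by rewrite sqrtr_gt0.
have xs : x = s * s by rewrite -expr2 sqr_sqrtr // ltW.
have : ln x = ln s + ln s by rewrite xs lnM ?posrE.
have := ln_le_sub1 s0.
move=> h1 h2.
have : (s - 1) ^+ 2 <= 0 by rewrite expr2; nra.
rewrite expr2 => h3.
have : s - 1 = 0 by nra.
move=> h4; rewrite xs; have -> : s = 1 by lra. by rewrite mulr1.
Qed.

Lemma sum_unit (F : unit -> R) : \sum_u F u = F tt.
Proof. by rewrite (bigD1 tt) //= big1 ?addr0 // => -[]. Qed.

Lemma sum_pair2 (A B : finType) (F : A * B -> R) :
  \sum_t F t = \sum_a \sum_b F (a, b).
Proof.
rewrite (pair_bigA _ (fun a b => F (a, b))) /=.
by apply: eq_bigr => -[].
Qed.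

Lemma sum_pair3 (A B C : finType) (F : A * B * C -> R) :
  \sum_t F t = \sum_a \sum_b \sum_c F (a, b, c).
Proof.
rewrite sum_pair2 sum_pair2; apply: eq_bigr => a _; done.
Qed.

Lemma drop_filter (T : finType) (p g : T -> R) :
  (forall t, 0 <= p t) -> \sum_(t | 0 < p t) p t * g t = \sum_t p t * g t.
Proof.
move=> p0; rewrite big_mkcond /=; apply: eq_bigr => t _.
case: ifPn => // /negbTE; rewrite lt_def p0 andbT => /negbFE/eqP ->; by rewrite mul0r.
Qed.

Lemma le_sum_term (T : finType) (F : T -> R) t0 :
  (forall t, 0 <= F t) -> F t0 <= \sum_t F t.
Proof. by move=> F0; rewrite (bigD1 t0) //= lerDl sumr_ge0. Qed.

Lemma ln2_gt0 : 0 < ln (2 : R).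
Proof. by apply: ln_gt0; rewrite ltr1n. Qed.

Lemma logsum_ln (I : finType) (a b : I -> R) :
  (forall i, 0 <= a i) -> (forall i, 0 <= b i) -> (forall i, 0 < a i -> 0 < b i) ->
  (\sum_i a i) * ln ((\sum_i a i) / (\sum_i b i)) <= \sum_i a i * ln (a i / b i).
Proof.
move=> a0 b0 ab; set A := \sum_i a i; set B := \sum_i b i.
have A0 : 0 <= A by rewrite sumr_ge0.
case: (eqVneq A 0) => [HA|HA].
  have z : forall i, a i = 0.
    by move=> i; apply: (@psumr_eq0P _ _ xpredT a (fun i _ => a0 i)).
  rewrite HA mul0r big1 // => i _; by rewrite z mul0r.
have Apos : 0 < A by rewrite lt_def HA A0.
have /existsP [i0 ai0] : [exists i, 0 < a i].
  apply: contraT => /existsPn H; move: HA; rewrite /A big1 ?eqxx // => i _.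
  by apply/eqP; rewrite eq_le a0 andbT leNgt; apply: H.
have Bpos : 0 < B by apply: (lt_le_trans (ab _ ai0)); apply: le_sum_term.
rewrite -subr_ge0 mulr_suml -sumrB.
have : \sum_i (a i - A / B * b i) <= \sum_i (a i * ln (a i / b i) - a i * ln (A / B)).
  apply: ler_sum => i _.
  case: (eqVneq (a i) 0) => [->|ai].
    rewrite !mul0r subrr sub0r oppr_le0; apply: mulr_ge0 => //.
    by apply: divr_ge0; apply: ltW.
  have aip : 0 < a i by rewrite lt_def ai a0.
  have bip := ab _ aip.
  set s := (A / B) / (a i / b i).
  have sp : 0 < s by rewrite /s !divr_gt0.
  have := ln_le_sub1 sp; rewrite /s ln_div ?posrE ?divr_gt0 // => h.
  have e : a i * ((A / B) / (a i / b i)) = A / B * b i.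
    by field; rewrite ?(lt0r_neq0 bip) ?ai ?(lt0r_neq0 Bpos).
  have h2 : a i * (1 - s) <= a i * (ln (a i / b i) - ln (A / B)).
    by rewrite ler_pM2l //; rewrite /s; lra.
  move: h2; rewrite /s mulrBr mulr1 mulrBr e; lra.
move=> h; apply: le_trans h; rewrite sumrB -mulr_sumr -/A -/B divfK ?subrr //.
exact: lt0r_neq0.
Qed.

Lemma logsum (I : finType) (a b : I -> R) :
  (forall i, 0 <= a i) -> (forall i, 0 <= b i) -> (forall i, 0 < a i -> 0 < b i) ->
  (\sum_i a i) * log2 ((\sum_i a i) / (\sum_i b i)) <= \sum_i a i * log2 (a i / b i).
Proof.
move=> a0 b0 ab; rewrite /log2 mulrA.
rewrite [X in _ <= X](eq_bigr (fun i => (a i * ln (a i / b i)) / ln 2)); last by move=> i _; rewrite mulrA.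
rewrite -mulr_suml ler_pM2r ?invr_gt0 ?ln2_gt0 //; exact: logsum_ln.
Qed.

Lemma ln_divV (x y : R) : 0 < x -> 0 < y -> ln (x / y) = - ln (y / x).
Proof. by move=> x0 y0; rewrite -lnV ?posrE ?divr_gt0 // invf_div. Qed.

Lemma gibbs_eq (T : finType) (p q : T -> R) :
  (forall t, 0 <= p t) -> (forall t, 0 <= q t) ->
  \sum_t p t = 1 -> \sum_t q t = 1 -> (forall t, 0 < p t -> 0 < q t) ->
  \sum_t p t * ln (p t / q t) <= 0 -> forall t, p t = q t.
Proof.
move=> p0 q0 sp sq pq H.
pose f t := (q t - p t) + p t * ln (p t / q t).
have f0 : forall t, 0 <= f t.
  move=> t; rewrite /f; case: (eqVneq (p t) 0) => [->|pn].
    by rewrite mul0r addr0 subr0.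
  have pp : 0 < p t by rewrite lt_def pn p0.
  have qp := pq _ pp.
  have := ln_le_sub1 (divr_gt0 qp pp).
  rewrite ln_divV //.
  have e : p t * (q t / p t) = q t by rewrite mulrC divfK // lt0r_neq0.
  move=> h; have h2 : p t * (- ln (q t / p t)) >= p t * (1 - q t / p t).
    by rewrite ler_pM2l //; lra.
  move: h2; rewrite mulrBr mulr1 e; lra.
have sf : \sum_t f t = 0.
  apply/eqP; rewrite eq_le sumr_ge0 ?andbT; last by move=> t _; exact: f0.
  by rewrite /f big_split /= sumrB sp sq subrr add0r.
move=> t; have ft : f t = 0 by apply: (@psumr_eq0P _ _ xpredT f (fun t _ => f0 t)).
move: ft; rewrite /f; case: (eqVneq (p t) 0) => [->|pn].
  by rewrite mul0r addr0 subr0 => ->.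
have pp : 0 < p t by rewrite lt_def pn p0.
have qp := pq _ pp.
rewrite ln_divV // => h.
have h2 : ln (q t / p t) = q t / p t - 1.
  apply: (mulfI pn); rewrite mulrBr mulr1 [p t * (q t / p t)]mulrC divfK //; lra.
have := ln_eq_sub1 (divr_gt0 qp pp) h2.
by move=> e; rewrite -[q t](divfK (lt0r_neq0 pp)) e mul1r.
Qed.

Lemma sum_log2 (T : finType) (f g : T -> R) :
  \sum_t f t * log2 (g t) = (\sum_t f t * ln (g t)) / ln 2.
Proof. by rewrite mulr_suml; apply: eq_bigr => t _; rewrite /log2 mulrA. Qed.

Lemma log2_1 : log2 (1 : R) = 0.
Proof. by rewrite /log2 ln1 mul0r. Qed.

Lemma MI_eq (A B : finType) (p : A * B -> R) (m1 : A -> R) (m2 : B -> R) :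
  (forall ab, 0 <= p ab) -> (forall a, \sum_b p (a, b) = m1 a) ->
  (forall b, \sum_a p (a, b) = m2 b) ->
  MI p = \sum_ab p ab * log2 (p ab / (m1 ab.1 * m2 ab.2)).
Proof.
move=> p0 h1 h2; rewrite /MI drop_filter //; apply: eq_bigr => ab _.
by rewrite h1 h2.
Qed.

Lemma CMI_eq (A B C : finType) (p : A * B * C -> R) (tot : C -> R)
  (m1 : A -> C -> R) (m2 : B -> C -> R) :
  (forall t, 0 <= p t) -> (forall c, \sum_a \sum_b p (a, b, c) = tot c) ->
  (forall a c, \sum_b p (a, b, c) = m1 a c) ->
  (forall b c, \sum_a p (a, b, c) = m2 b c) ->
  CMI p = \sum_t p t * log2 ((p t * tot t.2) / (m1 t.1.1 t.2 * m2 t.1.2 t.2)).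
Proof.
move=> p0 h0 h1 h2; rewrite /CMI drop_filter //; apply: eq_bigr => t _.
by rewrite h0 h1 h2.
Qed.

Lemma KL_eq (T : finType) (q p : T -> R) :
  (forall t, 0 <= q t) -> (forall t, p t = 0 -> q t = 0) ->
  KL q p = (\sum_t q t * log2 (q t / p t))%:E.
Proof.
move=> q0 h; rewrite /KL ifT ?drop_filter //.
by apply/forallP => t; apply/implyP => /eqP /h ->.
Qed.

Lemma pmf_ge0 (T : finType) (p : T -> R) : is_pmf p -> forall t, 0 <= p t.
Proof. by case. Qed.

Lemma MI_unit (Y : finType) (QY : Y -> R) :
  is_pmf QY -> MI (fun yu : Y * unit => QY yu.1 * 1) = 0.
Proof.
move=> [q0 q1]; rewrite /MI big1 // => -[y []] /= Hp.
rewrite sum_unit /=.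
have -> : \sum_a' QY a' * 1 = 1 by under eq_bigr do rewrite mulr1; exact: q1.
rewrite !mulr1 divff ?log2_1 ?mulr0 //.
by move: Hp; rewrite mulr1 => /lt0r_neq0.
Qed.

Lemma marg_pmf (Y U : finType) (QY : Y -> R) (QUY : Y -> U -> R) :
  is_pmf QY -> is_cpmf QUY -> is_pmf (fun u => \sum_y QY y * QUY y u).
Proof.
move=> [q0 q1] hU; split.
  by move=> u; apply: sumr_ge0 => y _; apply: mulr_ge0 => //; case: (hU y).
rewrite exchange_big /= -q1; apply: eq_bigr => y _.
by rewrite -mulr_sumr; case: (hU y) => _ ->; rewrite mulr1.
Qed.

Lemma prod_pmf (A B : finType) (p : A -> R) (q : B -> R) :
  is_pmf p -> is_pmf q -> is_pmf (fun ab : A * B => p ab.1 * q ab.2).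
Proof.
move=> [p0 p1] [q0 q1]; split; first by move=> ab; apply: mulr_ge0.
rewrite sum_pair2 /= -p1; apply: eq_bigr => a _.
by rewrite -mulr_sumr q1 mulr1.
Qed.

Lemma MI0_indep (Y U : finType) (QY : Y -> R) (QUY : Y -> U -> R) :
  is_pmf QY -> is_cpmf QUY ->
  MI (fun yu : Y * U => QY yu.1 * QUY yu.1 yu.2) <= 0 ->
  forall y u, QY y * QUY y u = QY y * \sum_y' QY y' * QUY y' u.
Proof.
move=> hY hU HMI.
pose V u := \sum_y' QY y' * QUY y' u.
have hV : is_pmf V by exact: marg_pmf.
have [q0 q1] := hY.
have p0 : forall yu : Y * U, 0 <= QY yu.1 * QUY yu.1 yu.2.
  by move=> [y u]; apply: mulr_ge0 => //; case: (hU y).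
rewrite (MI_eq (m1 := QY) (m2 := V)) // in HMI; last first.
  by move=> y; rewrite /= -mulr_sumr; case: (hU y) => _ ->; rewrite mulr1.
have hq := prod_pmf hY hV.
move=> y u.
apply: (@gibbs_eq _ (fun yu => QY yu.1 * QUY yu.1 yu.2) (fun yu => QY yu.1 * V yu.2)
  p0 (pmf_ge0 hq) _ hq.2 _ _ (y, u)).
- rewrite sum_pair2 /= -q1; apply: eq_bigr => y' _.
  by rewrite -mulr_sumr; case: (hU y') => _ ->; rewrite mulr1.
- move=> [y' u'] /= hp.
  have hy : 0 < QY y'.
    by rewrite lt_def q0 andbT; apply/eqP => e; move: hp; rewrite e mul0r ltxx.
  apply: mulr_gt0 => //; apply: lt_le_trans hp _.
  apply: (le_sum_term (F := fun y => QY y * QUY y u')) => y''.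
  by apply: mulr_ge0 => //; case: (hU y'').
- by move: HMI; rewrite sum_log2 ler_pdivrMr ?ln2_gt0 // mul0r.
Qed.

Lemma pos_mul (a b : R) : 0 <= a -> 0 <= b -> 0 < a * b -> 0 < a /\ 0 < b.
Proof.
move=> a0 b0 h; split; rewrite lt_def ?a0 ?b0 andbT; apply/eqP => e; move: h;
  by rewrite e ?mul0r ?mulr0 ltxx.
Qed.

Lemma RDc_unit_le (X Xh : finType) (d : X -> Xh -> R) (D : R) (QX : X -> R) :
  is_pmf QX -> (RDc d D (fun xu : X * unit => QX xu.1) <= RD d D QX)%E.
Proof.
move=> [q0 q1]; apply: le_ereal_inf_tmp => _ [W [HW Hd] <-].
have W0 : forall x xh, 0 <= W x xh by move=> x xh; case: (HW x).
apply: ge_ereal_inf; eexists.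
  exists (fun xu : X * unit => W xu.1) => //; split.
    by move=> xu; exact: HW.
  move: Hd; apply: le_trans; rewrite le_eqVlt; apply/orP; left; apply/eqP.
  by apply: eq_bigr => x _; rewrite sum_unit.
rewrite /= lee_fin le_eqVlt; apply/orP; left; apply/eqP.
have p0 : forall t : X * Xh * unit, 0 <= QX t.1.1 * W t.1.1 t.1.2.
  by move=> t; apply: mulr_ge0.
rewrite (CMI_eq (tot := fun _ => 1) (m1 := fun x _ => QX x)
   (m2 := fun xh _ => \sum_x' QX x' * W x' xh)) //; last first.
- by move=> x c /=; rewrite -mulr_sumr; case: (HW x) => _ ->; rewrite mulr1.
- move=> c /=; rewrite -q1; apply: eq_bigr => x _.
  by rewrite -mulr_sumr; case: (HW x) => _ ->; rewrite mulr1.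
rewrite (MI_eq (m1 := QX) (m2 := fun xh => \sum_x' QX x' * W x' xh)) //; last first.
- by move=> x /=; rewrite -mulr_sumr; case: (HW x) => _ ->; rewrite mulr1.
- by move=> ab; apply: mulr_ge0.
rewrite sum_pair3 sum_pair2; apply: eq_bigr => x _; apply: eq_bigr => xh _.
by rewrite sum_unit /= mulr1.
Qed.

Lemma RD_le_RDc (X Xh U : finType) (d : X -> Xh -> R) (D : R) (QX : X -> R)
  (V : U -> R) :
  is_pmf QX -> is_pmf V ->
  (RD d D QX <= RDc d D (fun xu : X * U => (QX xu.1 * V xu.2)%R))%E.
Proof.
move=> [q0 q1] [v0 v1]; apply: le_ereal_inf_tmp => _ [W [HW Hd] <-].
have W0 : forall xu xh, 0 <= W xu xh by move=> xu xh; case: (HW xu).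
pose W' x xh := \sum_u V u * W (x, u) xh.
have W'0 : forall x xh, 0 <= W' x xh.
  by move=> x xh; apply: sumr_ge0 => u _; apply: mulr_ge0.
have W'1 : forall x, \sum_xh W' x xh = 1.
  move=> x; rewrite /W' exchange_big /= -v1; apply: eq_bigr => u _.
  by rewrite -mulr_sumr; case: (HW (x, u)) => _ ->; rewrite mulr1.
apply: ge_ereal_inf; eexists.
  exists W' => //; split; first by move=> x; split; [exact: W'0|exact: W'1].
  move: Hd; apply: le_trans; rewrite le_eqVlt; apply/orP; left; apply/eqP.
  apply: eq_bigr => x _ /=; rewrite exchange_big /=; apply: eq_bigr => xh _.
  rewrite /W' mulr_sumr mulr_suml; apply: eq_bigr => u _; ring.
rewrite /= lee_fin.
pose r xh := \sum_x' QX x' * W' x' xh.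
pose ru u xh := \sum_x' QX x' * W (x', u) xh.
have p0 : forall t : X * Xh * U, 0 <= QX t.1.1 * V t.2 * W (t.1.1, t.2) t.1.2.
  by move=> t; rewrite mulr_ge0 ?mulr_ge0.
rewrite (CMI_eq (tot := V) (m1 := fun x u => QX x * V u)
   (m2 := fun xh u => V u * ru u xh)) //; last first.
- move=> xh u /=; rewrite /ru mulr_sumr; apply: eq_bigr => x _; ring.
- move=> x u /=; rewrite -mulr_sumr; case: (HW (x, u)) => _ ->; by rewrite mulr1.
- move=> u /=; rewrite (eq_bigr (fun a => QX a * V u)); last first.
    by move=> a _; rewrite -mulr_sumr; case: (HW (a, u)) => _ ->; rewrite mulr1.
  by rewrite -mulr_suml q1 mul1r.
rewrite (MI_eq (m1 := QX) (m2 := r)) //; last first.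
- by move=> x /=; rewrite -mulr_sumr W'1 mulr1.
- by move=> ab; apply: mulr_ge0.
rewrite sum_pair3 sum_pair2; apply: ler_sum => x _; apply: ler_sum => xh _ /=.
have ru0 : forall u, 0 <= ru u xh.
  by move=> u; apply: sumr_ge0 => x' _; apply: mulr_ge0.
have rup : forall u, 0 < QX x * W (x, u) xh -> 0 < ru u xh.
  move=> u h; apply: lt_le_trans h _.
  by apply: (le_sum_term (F := fun x' => QX x' * W (x', u) xh)) => x'; apply: mulr_ge0.
have L := @logsum _ (fun u => QX x * V u * W (x, u) xh) (fun u => QX x * V u * ru u xh)
  (fun u => p0 (x, xh, u)) (fun u => mulr_ge0 (mulr_ge0 (q0 x) (v0 u)) (ru0 u)).
have Sa : \sum_u QX x * V u * W (x, u) xh = QX x * W' x xh.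
  by rewrite /W' mulr_sumr; apply: eq_bigr => u _; ring.
have Sb : \sum_u QX x * V u * ru u xh = QX x * r xh.
  rewrite /r /W' /ru (eq_bigr (fun u => QX x * (V u * \sum_x' QX x' * W (x', u) xh))); last first.
    by move=> u _; ring.
  rewrite -mulr_sumr; congr (_ * _).
  under eq_bigr do rewrite mulr_sumr.
  rewrite exchange_big /=; apply: eq_bigr => x' _; rewrite mulr_sumr.
  by apply: eq_bigr => u _; ring.
rewrite Sa Sb in L.
apply: le_trans (L _) _.
  move=> u hu.
  have [/(pos_mul (q0 x) (v0 u)) [h1 h2] h3] := pos_mul (mulr_ge0 (q0 x) (v0 u)) (W0 _ _) hu.
  by rewrite !mulr_gt0 // rup // mulr_gt0.
rewrite le_eqVlt; apply/orP; left; apply/eqP; apply: eq_bigr => u _.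
case: (eqVneq (QX x * V u * W (x, u) xh) 0) => [->|hn]; first by rewrite !mul0r.
move: (hn); rewrite !mulf_eq0 !negb_or => /andP [/andP [h1 h2] h3].
have hr : ru u xh != 0.
  apply: lt0r_neq0; apply: rup; apply: mulr_gt0; rewrite lt_def ?h1 ?h3 ?q0 ?W0 //.
congr (_ * log2 _); field.
by rewrite h1 h2 hr.
Qed.

Lemma KL_marg3 (X Y Z : finType) (Q P : X * Y * Z -> R) :
  (forall t, 0 <= Q t) -> (forall t, 0 <= P t) ->
  (KL (fun x => (\sum_y \sum_z Q (x, y, z))%R) (fun x => (\sum_y \sum_z P (x, y, z))%R)
    <= KL Q P)%E.
Proof.
move=> Q0 P0.
case: (boolP [forall t, (P t == 0) ==> (Q t == 0)]) => H; last first.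
  by rewrite [X in (_ <= X)%E]/KL (negbTE H) leey.
have h : forall t, P t = 0 -> Q t = 0.
  by move=> t /eqP e; move/forallP: H => /(_ t); rewrite e /= => /eqP.
rewrite (KL_eq Q0 h).
have Qm0 : forall x, 0 <= \sum_y \sum_z Q (x, y, z).
  by move=> x; do 2 (apply: sumr_ge0 => ? _).
have Pm0 : forall x, 0 <= \sum_y \sum_z P (x, y, z).
  by move=> x; do 2 (apply: sumr_ge0 => ? _).
rewrite KL_eq //; last first.
  move=> x e; apply: big1 => y _; apply: big1 => z _; apply: h.
  have e2 : \sum_y \sum_z P (x, y, z) = \sum_(yz : Y * Z) P (x, yz.1, yz.2).
    by rewrite sum_pair2.
  rewrite e2 in e.
  by have := @psumr_eq0P _ _ xpredT (fun yz : Y * Z => P (x, yz.1, yz.2))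
    (fun yz _ => P0 _) e (y, z) isT.
rewrite lee_fin sum_pair3; apply: ler_sum => x _.
have L := @logsum _ (fun yz : Y * Z => Q (x, yz.1, yz.2)) (fun yz => P (x, yz.1, yz.2))
  (fun _ => Q0 _) (fun _ => P0 _).
rewrite !sum_pair2 /= in L.
apply: le_trans (L _) _; last first.
  exact: lexx.
move=> yz /lt0r_neq0 hq; rewrite lt_def P0 andbT; apply: contraNneq hq; by move/h ->.
Qed.

Lemma dir_le (X Y Xh : finType) (PXY : X * Y -> R) (d : X -> Xh -> R) (D rho : R)
  (QY : Y -> R) (QXYU : Y * unit -> X -> R) :
  is_pmf PXY -> is_pmf QY -> is_cpmf QXYU -> 0 < rho ->
  (rho%:E * RDc d D (fun xu : X * unit => (\sum_y QY y * 1 * QXYU (y, xu.2) xu.1)%R)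
   - KL (fun t : X * Y * unit => (QY t.1.2 * 1 * QXYU (t.1.2, t.2) t.1.1)%R)
        (fun t : X * Y * unit => (PXY t.1 * 1)%R)
   <= rho%:E * RD d D (fun x => (\sum_y QY y * QXYU (y, tt) x)%R)
      - KL (fun x => (\sum_y QY y * QXYU (y, tt) x)%R) (fun x => (\sum_y PXY (x, y))%R))%E.
Proof.
move=> [p0 p1] [qy0 qy1] hQ rho0.
have Q0 : forall yu x, 0 <= QXYU yu x by move=> yu x; case: (hQ yu).
have QXpmf : is_pmf (fun x => \sum_y QY y * QXYU (y, tt) x).
  split; first by move=> x; apply: sumr_ge0 => y _; apply: mulr_ge0.
  rewrite exchange_big /= -qy1; apply: eq_bigr => y _.
  by rewrite -mulr_sumr; case: (hQ (y, tt)) => _ ->; rewrite mulr1.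
apply: leeB.
  rewrite lee_pmul2l ?lte_fin //.
  have -> : (fun xu : X * unit => (\sum_y QY y * 1 * QXYU (y, xu.2) xu.1)%R)
     = (fun xu => (fun x => \sum_y QY y * QXYU (y, tt) x) xu.1).
    by apply/funext => -[x []]; apply: eq_bigr => y _; rewrite mulr1.
  exact: RDc_unit_le.
have H3 : forall t : X * Y * unit, 0 <= QY t.1.2 * 1 * QXYU (t.1.2, t.2) t.1.1.
  by move=> t; rewrite mulr1 mulr_ge0.
have H4 : forall t : X * Y * unit, 0 <= PXY t.1 * 1.
  by move=> t; rewrite mulr1.
apply: (le_trans _ (KL_marg3 H3 H4)).
rewrite le_eqVlt; apply/orP; left; apply/eqP; congr KL; apply/funext => x /=.
  by apply: eq_bigr => y _; rewrite sum_unit mulr1.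
by apply: eq_bigr => y _; rewrite sum_unit mulr1.
Qed.

Section Construct.
Variables (X Y : finType) (PXY : X * Y -> R) (QX : X -> R).
Hypothesis hP : is_pmf PXY.
Hypothesis hQ : is_pmf QX.
Hypothesis ac : forall x, \sum_y PXY (x, y) = 0 -> QX x = 0.

Definition Jf x y := QX x * PXY (x, y) / \sum_y' PXY (x, y').
Definition QYf y := \sum_x Jf x y.
Definition QXYUf (U : finType) (yu : Y * U) x :=
  if 0 < QYf yu.1 then Jf x yu.1 / QYf yu.1 else QX x.

Lemma PX0 x : 0 <= \sum_y PXY (x, y).
Proof. by apply: sumr_ge0 => y _; case: hP. Qed.

Lemma J0 x y : 0 <= Jf x y.
Proof.
rewrite /Jf; apply: mulr_ge0; last by rewrite invr_ge0 PX0.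
by apply: mulr_ge0; [case: hQ|case: hP].
Qed.

Lemma Jsum x : \sum_y Jf x y = QX x.
Proof.
rewrite /Jf; case: (eqVneq (\sum_y PXY (x, y)) 0) => [e|ne].
  by rewrite e invr0 big1 ?ac // => y _; rewrite mulr0.
by rewrite -mulr_suml -mulr_sumr mulfK.
Qed.

Lemma QY0 y : 0 <= QYf y.
Proof. by apply: sumr_ge0 => x _; exact: J0. Qed.

Lemma QYpmf : is_pmf QYf.
Proof.
split; first exact: QY0.
rewrite /QYf exchange_big /=; under eq_bigr do rewrite Jsum.
by case: hQ.
Qed.

Lemma QY_eq0 y x : ~ 0 < QYf y -> Jf x y = 0.
Proof.
move=> h; have e : QYf y = 0.
  by apply/eqP; rewrite eq_le QY0 andbT leNgt; apply/negP.
by apply: (@psumr_eq0P _ _ xpredT (fun x => Jf x y) (fun x _ => J0 x y)).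
Qed.

Lemma QYJ (U : finType) y (u : U) x : QYf y * QXYUf (y, u) x = Jf x y.
Proof.
rewrite /QXYUf /=; case: ifPn => h.
  by rewrite mulrC divfK // lt0r_neq0.
have e : QYf y = 0 by apply/eqP; rewrite eq_le QY0 andbT leNgt.
by rewrite e mul0r QY_eq0 //; apply/negP.
Qed.

Lemma QXYUpmf (U : finType) : is_cpmf (@QXYUf U).
Proof.
move=> [y u]; have [h|h] := boolP (0 < QYf y); last first.
  have -> : QXYUf (y, u) = QX by apply/funext => x; rewrite /QXYUf /= (negbTE h).
  by [].
have -> : QXYUf (y, u) = fun x => Jf x y / QYf y.
  by apply/funext => x; rewrite /QXYUf /= h.
split; first by move=> x; rewrite divr_ge0 ?J0 ?QY0.
have -> : \sum_x Jf x y / QYf y = (\sum_x Jf x y) / QYf y by rewrite mulr_suml.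
by rewrite divff // lt0r_neq0.
Qed.

Lemma dir_ge (Xh U : finType) (d : X -> Xh -> R) (D rho : R) (QUY : Y -> U -> R) :
  is_cpmf QUY -> 0 < rho ->
  (forall x u, \sum_y QUY y u * Jf x y = QX x * \sum_y QYf y * QUY y u) ->
  (rho%:E * RD d D QX - KL QX (fun x => (\sum_y PXY (x, y))%R)
   <= rho%:E * RDc d D (fun xu : X * U =>
          (\sum_y QYf y * QUY y xu.2 * QXYUf (y, xu.2) xu.1)%R)
      - KL (fun t : X * Y * U => (QYf t.1.2 * QUY t.1.2 t.2 * QXYUf (t.1.2, t.2) t.1.1)%R)
           (fun t : X * Y * U => (PXY t.1 * QUY t.1.2 t.2)%R))%E.
Proof.
move=> hU rho0 hind.
pose V u := \sum_y QYf y * QUY y u.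
have hV : is_pmf V := marg_pmf QYpmf hU.
have U0 : forall y u, 0 <= QUY y u by move=> y u; case: (hU y).
have [q0 q1] := hQ.
have [p0 p1] := hP.
apply: leeB.
  rewrite lee_pmul2l ?lte_fin //.
  have -> : (fun xu : X * U => (\sum_y QYf y * QUY y xu.2 * QXYUf (y, xu.2) xu.1)%R)
      = (fun xu => (QX xu.1 * V xu.2)%R).
    apply/funext => -[x u] /=; rewrite -hind; apply: eq_bigr => y _.
    by rewrite mulrAC QYJ mulrC.
  exact: RD_le_RDc hQ hV.
have e3 : forall t : X * Y * U, QYf t.1.2 * QUY t.1.2 t.2 * QXYUf (t.1.2, t.2) t.1.1
    = QUY t.1.2 t.2 * Jf t.1.1 t.1.2.
  by move=> t; rewrite mulrAC QYJ mulrC.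
have e : KL (fun t : X * Y * U => (QYf t.1.2 * QUY t.1.2 t.2 * QXYUf (t.1.2, t.2) t.1.1)%R)
           (fun t : X * Y * U => (PXY t.1 * QUY t.1.2 t.2)%R)
         = KL QX (fun x => (\sum_y PXY (x, y))%R).
  rewrite (KL_eq q0 ac) KL_eq; first last.
  - move=> [[x y] u] ht; rewrite e3 /=.
    have : PXY (x, y) * QUY y u == 0 by apply/eqP.
    rewrite mulf_eq0 => /orP [/eqP h|/eqP ->]; last by rewrite mul0r.
    by rewrite /Jf h mulr0 mul0r mulr0.
  - by move=> t; rewrite e3 mulr_ge0 ?J0.
  congr (_%:E); rewrite sum_pair3; apply: eq_bigr => x _.
  rewrite (eq_bigr (fun y => Jf x y * log2 (QX x / \sum_y PXY (x, y)))).
    by rewrite -mulr_suml Jsum.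
  move=> y _; rewrite -[RHS]mul1r; case: (hU y) => _ <-; rewrite mulr_suml.
  apply: eq_bigr => u _ /=; rewrite (e3 (x, y, u)) /=.
  case: (eqVneq (QUY y u * Jf x y) 0) => [h0|hn].
    by rewrite h0 mul0r mulrA h0 mul0r.
  rewrite mulrA; congr (_ * log2 _).
  move: hn; rewrite mulf_eq0 negb_or => /andP [h1]; rewrite /Jf.
  rewrite !mulf_eq0 !negb_or invr_eq0 => /andP [/andP [h2 h3] h4].
  by field; rewrite h1 h3 h4.
by rewrite e.
Qed.

End Construct.

End Helpers.

Unset Implicit Arguments.
Lemma mix_pmf (R : realType) (X Y : finType) (QY : Y -> R) (Q : Y * unit -> X -> R) :
  is_pmf QY -> is_cpmf Q -> is_pmf (fun x => \sum_y QY y * Q (y, tt) x).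
Proof.
move=> [qy0 qy1] hQ.
have Q0 : forall yu x, 0 <= Q yu x by move=> yu x; case: (hQ yu).
split; first by move=> x; apply: sumr_ge0 => y _; apply: mulr_ge0.
rewrite exchange_big /= -qy1; apply: eq_bigr => y _.
by rewrite -mulr_sumr; case: (hQ (y, tt)) => _ ->; rewrite mulr1.
Qed.

Theorem mainTheorem4 (R : realType) (X Y Xh : finType)
  (PXY : X * Y -> R) (d : X -> Xh -> R) (D r rho : R) :
  is_pmf PXY ->
  (forall x xh, 0 <= d x xh) ->
  0 < D -> 0 <= r -> 0 < rho ->
  (r = 0 \/
   forall x y, PXY (x, y) = (\sum_y' PXY (x, y')) * (\sum_x' PXY (x', y))) ->
  ereal_sup
    [set ereal_inf
       [set v : \bar R | exists (U : finType) (QUY : Y -> U -> R),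
          [/\ is_cpmf QUY,
              MI (fun yu : Y * U => QY yu.1 * QUY yu.1 yu.2) <= r &
              v = ereal_sup
                [set (rho%:E *
                        RDc d D (fun xu : X * U =>
                          (\sum_y QY y * QUY y xu.2 * QXYU (y, xu.2) xu.1)%R)
                      - KL (fun t : X * Y * U =>
                              (QY t.1.2 * QUY t.1.2 t.2 * QXYU (t.1.2, t.2) t.1.1)%R)
                           (fun t : X * Y * U =>
                              (PXY t.1 * QUY t.1.2 t.2)%R))%E
                | QXYU in [set QXYU : Y * U -> X -> R | is_cpmf QXYU]]]]
    | QY in [set QY : Y -> R | is_pmf QY]]
  =
  ereal_sup
    [set (rho%:E * RD d D QX - KL QX (fun x => (\sum_y PXY (x, y))%R))%E
    | QX in [set QX : X -> R | is_pmf QX]].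
Proof.
move=> hP d0 D0 r0 rho0 hcase.
apply/eqP; rewrite eq_le; apply/andP; split.
- apply: ge_ereal_sup => _ [QY hQY <-].
  apply: ge_ereal_inf; eexists.
    exists unit, (fun _ _ => 1); split => //.
      by move=> y; split; [move=> ?; exact: ler01 | rewrite sum_unit].
    by rewrite [X in X <= _](_ : _ = 0) //; exact: MI_unit.
  apply: ge_ereal_sup => _ [QXYU hQ <-].
  apply: le_trans (@dir_le _ _ _ _ _ d D rho QY QXYU hP hQY hQ rho0) _.
  apply: ereal_sup_ubound; exists (fun x => \sum_y QY y * QXYU (y, tt) x) => //.
  exact: mix_pmf.
- apply: ge_ereal_sup => _ [QX hQX <-].
  case: (boolP [forall x, ((\sum_y PXY (x, y)) == 0) ==> (QX x == 0)]) => H; last first.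
    have -> : KL QX (fun x => (\sum_y PXY (x, y))%R) = +oo%E by rewrite /KL (negbTE H).
    by rewrite /= addeNy leNye.
  have ac : forall x, \sum_y PXY (x, y) = 0 -> QX x = 0.
    by move=> x /eqP e; move/forallP: H => /(_ x); rewrite e /= => /eqP.
  apply: le_ereal_sup_tmp; eexists; first by exists (QYf PXY QX) => //; exact: QYpmf.
  apply: le_ereal_inf_tmp => _ [U [QUY [hU hMI ->]]].
  apply: le_ereal_sup_tmp; eexists; first by exists (QXYUf PXY QX (U:=U)) => //; exact: QXYUpmf.
  apply: dir_ge => //.
  have [qx0 qx1] := hQX.
  have [p0 p1] := hP.
  case: hcase => [r00|hI] x u.
  + move: hMI; rewrite r00 => hMI.
    have I := MI0_indep (QYpmf hP hQX ac) hU hMI.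
    rewrite (eq_bigr (fun y => (\sum_y' QYf PXY QX y' * QUY y' u) * Jf PXY QX x y)).
      by rewrite -mulr_sumr Jsum // mulrC.
    move=> y _; case: (boolP (0 < QYf PXY QX y)) => hy.
      by congr (_ * _); apply: (mulfI (lt0r_neq0 hy)); rewrite I.
    by rewrite QY_eq0 // ?mulr0 //; apply/negP.
  + have eJ : forall y, Jf PXY QX x y = QX x * \sum_x' PXY (x', y).
      move=> y; rewrite /Jf hI; case: (eqVneq (\sum_y' PXY (x, y')) 0) => [e|ne].
        by rewrite (ac _ e) !mul0r.
      by field.
    have eQ : forall y, QYf PXY QX y = \sum_x' PXY (x', y).
      move=> y; rewrite /QYf /Jf.
      rewrite (eq_bigr (fun x0 => QX x0 * \sum_x' PXY (x', y))).
        by rewrite -mulr_suml qx1 mul1r.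
      move=> x0 _; rewrite hI; case: (eqVneq (\sum_y' PXY (x0, y')) 0) => [e|ne].
        by rewrite (ac _ e) !mul0r.
      by field.
    rewrite mulr_sumr; apply: eq_bigr => y _; rewrite eJ eQ; ring.
Qed.
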